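(* Let $A$ be a $K$-algebra with centre $Z(A)$ that admits a set of generators $\{a_i\mid i\in I\}$ such that, with $\Delta=\{\mathrm{ad}_{a_i}\mid i\in I\}\subseteq\mathrm{Der}_{Z(A)}(A)$, the algebra $A$ is $\Delta$-locally nilpotent. Then every nonzero ideal of $A$ has nonzero intersection with $Z(A)$.
   Context: $\mathrm{ad}_a(f)=af-fa$. For $i\ge1$, $\Delta^i=\{\delta_1\cdots\delta_i\mid\delta_j\in\Delta\}$; $N_\Delta(A)=\bigcup_{i\geq0}\{x\in A\mid\Delta^{i+1}x=0\}$. $A$ is $\Delta$-locally nilpotent if $A=N_\Delta(A)$. *)

(* Defs.v *)
From HB Require Import structures.
From mathcomp Require Import all_boot all_order all_algebra.
Set Implicit Arguments. Unset Strict Implicit. Unset Printing Implicit Defensive.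
Import GRing.Theory.
Local Open Scope ring_scope.

Definition ad (R : ringType) (a f : R) : R := a * f - f * a.

Definition central (R : ringType) (z : R) : Prop := forall y : R, z * y = y * z.

Definition generates_alg (K : comNzRingType) (A : algType K) (I : Type)
  (a : I -> A) : Prop :=
  forall S : {pred A}, subalg_closed S -> (forall i, a i \in S) ->
    forall x : A, x \in S.

(* Delta^{n+1} x = 0 with Delta = {ad_{a i} | i in I}: every composite
   ad_{a i_1} ... ad_{a i_{n+1}} kills x. *)
Definition iter_ad (R : ringType) (I : Type) (a : I -> R) (s : seq I) (x : R) : R :=
  foldr (fun i y => ad (a i) y) x s.

Definition ad_locally_nilpotent (R : ringType) (I : Type) (a : I -> R) : Prop :=
  forall x : R, exists n : nat, forall s : seq I, size s = n.+1 -> iter_ad a s x = 0.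

Definition is_ideal (R : ringType) (J : {pred R}) : Prop :=
  [/\ 0 \in J,
      (forall x y, x \in J -> y \in J -> x - y \in J),
      (forall r x, x \in J -> r * x \in J) &
      (forall r x, x \in J -> x * r \in J)].

(* Main.v *)
Require Import Defs.
From HB Require Import structures.
From mathcomp Require Import all_boot all_order all_algebra.
From Stdlib Require Import Classical.
Import GRing.Theory.
Local Open Scope ring_scope.

Lemma central_of_gen (K : comNzRingType) (A : algType K) (I : Type) (a : I -> A)
  (hgen : generates_alg a) (x : A) :
  (forall i, a i * x = x * a i) -> central x.
Proof.
move=> H.
pose S : {pred A} := [pred y | y * x == x * y].
have cS : subalg_closed S.
  split.
  - by rewrite inE mul1r mulr1.
  - move=> k u v; rewrite !inE => /eqP hu /eqP hv.
    by rewrite mulrDl mulrDr -scalerAl -scalerAr hu hv.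
  - move=> u v; rewrite !inE => /eqP hu /eqP hv.
    by rewrite -mulrA hv mulrA hu mulrA.
move=> y; have := hgen S cS (fun i => introT eqP (H i)) y.
by rewrite inE => /eqP.
Qed.

Theorem corollary1p9 (K : comNzRingType) (A : algType K) (I : Type) (a : I -> A)
  (hgen : generates_alg a) (hnil : ad_locally_nilpotent a)
  (J : {pred A}) (hJ : is_ideal J) (hJ0 : exists x, x \in J /\ x != 0) :
  exists z : A, [/\ z \in J, z != 0 & central z].
Proof.
case: hJ0 => x [xJ x0].
case: (hnil x) => n hn.
case: hJ => J0 JB JL JR.
have adJ : forall i y, y \in J -> ad (a i) y \in J.
  by move=> i y yJ; rewrite /ad; apply: JB; [apply: JL | apply: JR].
suff: forall m s, (size s + m = n.+1)%N -> iter_ad a s x \in J ->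
    iter_ad a s x != 0 -> exists z : A, [/\ z \in J, z != 0 & central z].
  by move=> H; apply: (H n.+1 [::]).
elim=> [|m IH] s hs yJ y0.
  by move: y0; rewrite hn ?eqxx // -hs addn0.
destruct (classic (exists i, ad (a i) (iter_ad a s x) != 0)) as [[i hi]|hno].
  apply: (IH (i :: s)) => //=; first by rewrite -hs addSnnS.
  exact: adJ.
exists (iter_ad a s x); split=> //.
apply: (@central_of_gen _ _ _ _ hgen) => i.
apply/eqP; rewrite -subr_eq0; apply/negPn/negP => hne.
by apply: hno; exists i.
Qed.
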